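(* The twist polynomial of set systems satisfies the four-term relation: for every proper set system $D=(E,\mathcal{F})$ and every pair of distinct elements $a,b\in E$, $$\partial_{\omega_{D}}(z)+\partial_{\omega_{\widetilde{D'}_{ab}}}(z)-\partial_{\omega_{D'_{ab}}}(z)-\partial_{\omega_{\widetilde{D}_{ab}}}(z)=0.$$
   Context: A set system $D=(E,\mathcal{F})$ is a finite set $E$ together with a collection $\mathcal{F}$ of subsets of $E$ (feasible sets); proper means $\mathcal{F}\neq\emptyset$. $\triangle$ denotes symmetric difference. For $A\subseteq E$, the twist is $D*A=(E,\{A\triangle X: X\in\mathcal{F}\})$. The width $\omega(D)$ is the size of a largest feasible set minus the size of a smallest feasible set. The twist polynomial is $\partial_{\omega_D}(z)=\sum_{A\subseteq E} z^{\omega(D*A)}$. For distinct $a,b\in E$: handle sliding of $a$ over $b$ gives $\widetilde{D}_{ab}=(E,\mathcal{F}\triangle\{F\cup\{a\}\mid F\cup\{b\}\in\mathcal{F},\ F\subseteq E\setminus\{a,b\}\})$; exchanging handle ends of $a$ and $b$ gives $D'_{ab}=(E,\mathcal{F}\triangle\{F\cup\{a,b\}\mid F\in\mathcal{F},\ F\subseteq E\setminus\{a,b\}\})$; and $\widetilde{D'}_{ab}$ denotes the result of first exchanging handle ends of $a,b$ in $D$ and then sliding $a$ over $b$ in the resulting set system. *)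

(* Defs.v *)
From mathcomp Require Import all_boot all_order all_algebra.
Set Implicit Arguments. Unset Strict Implicit. Unset Printing Implicit Defensive.
Import GRing.Theory.

(* A set system on the ground set E (a finType) is given by its family of
   feasible sets F : {set {set E}}; it is proper iff F != set0. *)

Section SetSystems.
Variable E : finType.
Implicit Types (F : {set {set E}}) (A X : {set E}).

Definition symdiff A X : {set E} := (A :\: X) :|: (X :\: A).

Definition twist F A : {set {set E}} := [set symdiff A X | X in F].

(* width: size of a largest feasible set minus size of a smallest one.
   (For F nonempty; the min is taken with neutral #|E|, which is an upper
   bound for all feasible set sizes, so it equals the true minimum.) *)
Definition maxsize F : nat := \max_(X in F) #|X|.
Definition minsize F : nat := \big[minn/#|E|]_(X in F) #|X|.
Definition width F : nat := maxsize F - minsize F.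

Definition twist_poly F : {poly int} := \sum_(A : {set E}) 'X^(width (twist F A)).

Definition fsymdiff (F G : {set {set E}}) : {set {set E}} := (F :\: G) :|: (G :\: F).

Definition handle_slide F (a b : E) : {set {set E}} :=
  fsymdiff F [set a |: G | G in [set G : {set E} |
                 [&& a \notin G, b \notin G & (b |: G) \in F]]].

Definition handle_exchange F (a b : E) : {set {set E}} :=
  fsymdiff F [set (a |: (b |: G)) | G in [set G in F |
                 (a \notin G) && (b \notin G)]].
End SetSystems.

(* Main.v *)
Require Import Defs.
From mathcomp Require Import all_boot all_order all_algebra.
From mathcomp Require Import zify.
Import GRing.Theory.

Section Aux.
Variable E : finType.
Implicit Types (F G : {set {set E}}) (A X Y : {set E}).

Definition same_sizes F G :=
  forall X, X \in F -> exists2 Y, Y \in G & #|Y| = #|X|.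

Lemma max_le F G : same_sizes F G -> maxsize F <= maxsize G.
Proof.
move=> h; rewrite /maxsize; apply: (big_ind (fun x => x <= maxsize G)) => //.
  by move=> x y hx hy; rewrite geq_max hx hy.
move=> X /h [Y hY <-]; by rewrite /maxsize (bigD1 Y) //= leq_maxl ?orbT.
Qed.

Lemma minsize_leE F : minsize F <= #|E|.
Proof.
rewrite /minsize; apply: (big_ind (fun x => x <= #|E|)) => //.
  by move=> x y hx hy; rewrite geq_min hx.
by move=> X _; apply: max_card.
Qed.

Lemma min_le F G : same_sizes F G -> minsize G <= minsize F.
Proof.
move=> h; rewrite {2}/minsize; apply: (big_ind (fun x => minsize G <= x)).
- exact: minsize_leE.
- by move=> x y hx hy; rewrite leq_min hx hy.
move=> X /h [Y hY <-]; rewrite /minsize.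
have : Y \in index_enum {set E} by rewrite mem_index_enum.
elim: (index_enum _) => [//|Z s IH]; rewrite in_cons big_cons.
case/orP => [/eqP <-|/IH]; first by rewrite hY geq_minl.
by move=> h1; case: (Z \in G) => //; rewrite geq_min h1 orbT.
Qed.

Lemma width_eq F G : same_sizes F G -> same_sizes G F -> width F = width G.
Proof.
move=> h1 h2; rewrite /width.
have e1 : maxsize F = maxsize G by apply/eqP; rewrite eqn_leq !max_le.
have e2 : minsize F = minsize G by apply/eqP; rewrite eqn_leq !min_le.
by rewrite e1 e2.
Qed.

Definition same_tsizes A F G :=
  forall X, X \in F -> exists2 Y, Y \in G & #|symdiff A Y| = #|symdiff A X|.

Lemma width_twist_eq A F G : same_tsizes A F G -> same_tsizes A G F ->
  width (twist F A) = width (twist G A).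
Proof.
have H : forall F G, same_tsizes A F G -> same_sizes (twist F A) (twist G A).
  move=> F1 G1 h X /imsetP [X0 hX0 ->]; have [Y hY e] := h _ hX0.
  by exists (symdiff A Y) => //; apply: imset_f.
by move=> h1 h2; apply: width_eq; apply: H.
Qed.

Lemma card_sd_add A (G : {set E}) x : x \notin G ->
  #|symdiff A (x |: G)| + (x \in A) = #|symdiff A G| + (x \notin A).
Proof.
move=> xG; case xA: (x \in A) => /=.
- have -> : symdiff A (x |: G) = (symdiff A G) :\ x.
    apply/setP => y; rewrite /symdiff !inE.
    by case: (eqVneq y x) => [->|]; rewrite ?xA ?(negbTE xG) //=.
  rewrite [#|symdiff A G|](cardsD1 x) /symdiff !inE xA (negbTE xG) /=.
  by rewrite addnC addn0.
- have -> : symdiff A (x |: G) = x |: (symdiff A G).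
    apply/setP => y; rewrite /symdiff !inE.
    by case: (eqVneq y x) => [->|]; rewrite ?xA ?(negbTE xG) //=.
  by rewrite cardsU1 /symdiff !inE xA (negbTE xG) /= addn0 addnC.
Qed.

Variables (a b : E).
Hypothesis ab : a != b.

Lemma mem_fsymdiff F G X : (X \in fsymdiff F G) = (X \in F) (+) (X \in G).
Proof. by rewrite /fsymdiff !inE; case: (X \in F); case: (X \in G). Qed.

Lemma mem_slide F X : X \in handle_slide F a b =
  (X \in F) (+) [&& a \in X, b \notin X & (b |: (X :\ a)) \in F].
Proof.
rewrite /handle_slide mem_fsymdiff; congr (_ (+) _).
apply/imsetP/and3P.
- move=> [G]; rewrite inE => /and3P [aG bG bGF] ->.
  rewrite !inE eqxx /= (negbTE bG) orbF eq_sym (negbTE ab); split => //.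
  have -> : (a |: G) :\ a = G.
    apply/setP => y; rewrite !inE; case: (eqVneq y a) => [->|] //=.
    by rewrite (negbTE aG).
  done.
- move=> [aX bX h]; exists (X :\ a).
    rewrite inE h !inE eqxx /= andbT.
    by apply/negP => /andP [_ /(negP bX)].
  by apply/setP => y; rewrite !inE; case: (eqVneq y a) => [->|] //=.
Qed.

Lemma mem_exch F X : X \in handle_exchange F a b =
  (X \in F) (+) [&& a \in X, b \in X & (X :\ a :\ b) \in F].
Proof.
rewrite /handle_exchange mem_fsymdiff; congr (_ (+) _).
apply/imsetP/and3P.
- move=> [G]; rewrite inE => /andP [GF /andP [aG bG]] ->.
  rewrite !inE !eqxx /= orbT; split => //.
  have -> : (a |: (b |: G)) :\ a :\ b = G.
    apply/setP => y; rewrite !inE; case: (eqVneq y b) => [->|] /=.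
      by rewrite (negbTE bG).
    by move=> _; case: (eqVneq y a) => [->|_] /=; rewrite ?(negbTE aG).
  done.
- move=> [aX bX h]; exists (X :\ a :\ b).
    by rewrite inE h !inE !eqxx /= andbF.
  apply/setP => y; rewrite !inE.
  case: (eqVneq y a) => [->|] //=; case: (eqVneq y b) => [->|] //=.
Qed.

Lemma slide_exch F : handle_slide (handle_exchange F a b) a b =
  handle_exchange (handle_slide F a b) a b.
Proof.
apply/setP => X.
have h1 : (b |: (X :\ a)) \in handle_exchange F a b = ((b |: (X :\ a)) \in F).
  by rewrite mem_exch !inE (negbTE ab) eqxx /= addbF.
have h2 : (X :\ a :\ b) \in handle_slide F a b = ((X :\ a :\ b) \in F).
  by rewrite mem_slide !inE eqxx (negbTE ab) /= ?andbF addbF.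
rewrite (mem_slide (handle_exchange F a b)) (mem_exch (handle_slide F a b)).
rewrite h1 h2 (mem_exch F X) (mem_slide F X).
case: (a \in X); case: (b \in X) => //=; rewrite ?addbF //.
Qed.

Lemma L1 A F : (a \in A) = (b \in A) ->
  width (twist (handle_slide F a b) A) = width (twist F A).
Proof.
move=> eAB; apply: width_twist_eq => X.
- rewrite mem_slide; case XF: (X \in F) => /=.
    by move=> _; exists X.
  move=> /and3P [aX bX h]; exists (b |: (X :\ a)) => //.
  have aG : a \notin X :\ a by rewrite !inE eqxx.
  have bG : b \notin X :\ a by rewrite !inE (negbTE bX) andbF.
  have e1 := card_sd_add A _ _ aG; have e2 := card_sd_add A _ _ bG.
  rewrite setD1K // in e1.
  rewrite -eAB in e2; move: e1 e2; case: (a \in A) => /=; lia.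
- move=> XF; case h: [&& a \in X, b \notin X & (b |: (X :\ a)) \in F].
  + move/and3P: h => [aX bX h]; exists (b |: (X :\ a)).
      by rewrite mem_slide h /= !inE eqxx /= (negbTE ab).
    have aG : a \notin X :\ a by rewrite !inE eqxx.
    have bG : b \notin X :\ a by rewrite !inE (negbTE bX) andbF.
    have e1 := card_sd_add A _ _ aG; have e2 := card_sd_add A _ _ bG.
    rewrite setD1K // in e1.
    rewrite -eAB in e2; move: e1 e2; case: (a \in A) => /=; lia.
  + by exists X => //; rewrite mem_slide XF h.
Qed.

Lemma L2 A F : (a \in A) = ~~ (b \in A) ->
  width (twist (handle_exchange F a b) A) = width (twist F A).
Proof.
move=> eAB.
have key : forall X, a \in X -> b \in X ->
    #|symdiff A (X :\ a :\ b)| = #|symdiff A X|.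
  move=> X aX bX.
  have bG : b \notin X :\ a :\ b by rewrite !inE eqxx.
  have aG : a \notin b |: (X :\ a :\ b) by rewrite !inE eqxx /= (negbTE ab).
  have e1 := card_sd_add A _ _ aG; have e2 := card_sd_add A _ _ bG.
  have e3 : b |: (X :\ a :\ b) = X :\ a by rewrite setD1K // !inE eq_sym ab bX.
  rewrite e3 setD1K // in e1.
  rewrite e3 in e2; rewrite eAB in e1; move: e1 e2; case: (b \in A) => /=; lia.
apply: width_twist_eq => X.
- rewrite mem_exch; case XF: (X \in F) => /=.
    by move=> _; exists X.
  move=> /and3P [aX bX h]; exists (X :\ a :\ b) => //; exact: key.
- move=> XF; case h: [&& a \in X, b \in X & (X :\ a :\ b) \in F].
  + move/and3P: h => [aX bX h]; exists (X :\ a :\ b).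
      by rewrite mem_exch h /= !inE eqxx /= andbF.
    exact: key.
  + by exists X => //; rewrite mem_exch XF h.
Qed.

End Aux.

Local Open Scope ring_scope.

Theorem theorem3p7 (E : finType) (F : {set {set E}}) (a b : E) :
  F != set0 -> a != b ->
  twist_poly F + twist_poly (handle_slide (handle_exchange F a b) a b)
  - twist_poly (handle_exchange F a b) - twist_poly (handle_slide F a b) = 0.
Proof.
move=> _ ab; rewrite /twist_poly -big_split /= -!sumrB; apply: big1 => A _.
case ha: (a \in A); case hb: (b \in A).
- rewrite (@L1 _ a b ab) ?ha ?hb // (@L1 _ a b ab) ?ha ?hb //.
  by rewrite addrK subrr.
- rewrite (@slide_exch _ a b ab) (@L2 _ a b ab) ?ha ?hb // (@L2 _ a b ab) ?ha ?hb //.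
  by rewrite addrAC addrK subrr.
- rewrite (@slide_exch _ a b ab) (@L2 _ a b ab) ?ha ?hb // (@L2 _ a b ab) ?ha ?hb //.
  by rewrite addrAC addrK subrr.
- rewrite (@L1 _ a b ab) ?ha ?hb // (@L1 _ a b ab) ?ha ?hb //.
  by rewrite addrK subrr.
Qed.
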